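(* Suppose Assumptions A1 and A2 (stated in the context) hold, and let $\widetilde Y_n=Y_n-F_n\beta_0$. There exists an integer $N_4$ depending only on $\nu,d,\theta_0,\alpha_0,L,r_0,\kappa$ such that for any $\epsilon_1,\epsilon_2\in(0,1/2)$ and all $n>N_4$, with probability at least $1-\exp(-\log^2n)$, $$\inf\Big\{\widetilde Y_n^T\big[\Omega(\theta,\alpha,\tau)^{-1}-\Omega_0^{-1}\big]F_n(\beta-\beta_0)-\tfrac12(\beta-\beta_0)^TF_n^T\big[\Omega(\theta,\alpha,\tau)^{-1}-\Omega_0^{-1}\big]F_n(\beta-\beta_0)\Big\}\ \ge\ -8C_{\mathrm f}p^{1/2}\{\theta_0K_{\alpha_0,\nu}(0)+\tau_0\}^{1/2}\tau_0^{-1}n^{-1}-2C_{\mathrm f}^2p\,\tau_0^{-1}n^{-4},$$ where $\Omega(\theta,\alpha,\tau)=\theta K_{\alpha,\nu}(S_n)+\tau I_n$, $\Omega_0=\theta_0K_{\alpha_0,\nu}(S_n)+\tau_0I_n$, and the infimum is over all $(\theta,\alpha,\tau,\beta)$ with $|\theta/\theta_0-1|<\epsilon_1$, $|\tau/\tau_0-1|<\epsilon_2$, $\alpha>0$ and $\|\beta-\beta_0\|\le n^{-3}$.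
   Context: Model: $Y(\mathbf s)=\mathrm f(\mathbf s)^T\beta+X(\mathbf s)+\varepsilon(\mathbf s)$ on $[0,1]^d$ with known $\mathrm f=(\mathrm f_1,\dots,\mathrm f_p)^T$, $X$ zero-mean Gaussian with covariance $\theta K_{\alpha,\nu}(\mathbf s-\mathbf t)$ ($K_{\alpha,\nu}$ positive definite, $\nu>0$ fixed), $\varepsilon$ independent Gaussian white noise with variance $\tau$; true parameter $(\theta_0,\alpha_0,\tau_0,\beta_0)$, under which the probability is computed. $Y_n=(Y(\mathbf s_i))_{i\le n}$ and $F_n$ (rows $\mathrm f(\mathbf s_i)^T$) at distinct points $S_n\subset[0,1]^d$; $K_{\alpha,\nu}(S_n)=(K_{\alpha,\nu}(\mathbf s_i-\mathbf s_j))$. Spectral density $f_{\theta,\alpha,\nu}(w)=(2\pi)^{-d}\int e^{-\imath w^Tx}\theta K_{\alpha,\nu}(x)dx$. A1: $\sup_{\mathbf s^*\in[0,1]^d}\min_i\|\mathbf s^*-\mathbf s_i\|\to0$ and $|\mathrm f_l(\mathbf s)|\le C_{\mathrm f}$ for all $l,\mathbf s$. A2: (i) there exist $L>0$, $r_0\in(0,1/2)$, $\kappa>0$ such that $\sup_w|f_{\theta_0,\alpha,\nu}(w)/f_{\theta_0,\alpha_0,\nu}(w)-1|\le L|\alpha/\alpha_0-1|^\kappa$ when $|\alpha/\alpha_0-1|\le r_0$; (ii) $f_{\theta,\alpha,\nu}(w)$ is non-increasing in $\alpha$ for each $\theta,w$. *)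

(* Defs.v *)
From HB Require Import structures.
From mathcomp Require Import all_boot all_order all_algebra.
From mathcomp Require Import all_classical all_reals all_analysis.
Set Implicit Arguments. Unset Strict Implicit. Unset Printing Implicit Defensive.
Import Order.TTheory GRing.Theory Num.Theory.
Import numFieldNormedType.Exports.
Local Open Scope classical_set_scope.
Local Open Scope ring_scope.

Section Defs.
Context {R : realType}.

Definition dotp {d : nat} (x y : 'rV[R]_d) : R := \sum_(i < d) x ord0 i * y ord0 i.

Definition enormr {d : nat} (x : 'rV[R]_d) : R := Num.sqrt (\sum_(i < d) x ord0 i ^+ 2).
Definition enormc {p : nat} (x : 'cV[R]_p) : R := Num.sqrt (\sum_(i < p) x i ord0 ^+ 2).

Definition in_cube {d : nat} (x : 'rV[R]_d) : Prop := forall i, 0 <= x ord0 i <= 1.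

(* iterated Lebesgue integral over R^d (equal to the Lebesgue integral on R^d
   for integrable integrands, by Fubini) *)
Fixpoint iint (d : nat) (g : seq R -> R) : R :=
  match d with
  | 0 => g [::]
  | d'.+1 => \int[@lebesgue_measure R]_(x in [set: R]) iint d' (fun s => g (x :: s))
  end.

Definition row_of_seq (d : nat) (s : seq R) : 'rV[R]_d := \row_(i < d) nth 0 s i.

(* spectral density f_{theta,alpha,nu}(w) = (2 pi)^{-d} int e^{-i w^T x} theta K_{alpha,nu}(x) dx.
   K is even (positive definite real function), so the sine part vanishes and
   e^{-i w^T x} is replaced by cos(w^T x). *)
Definition specdens (d : nat) (K : R -> R -> 'rV[R]_d -> R) (nu theta alpha : R)
  (w : 'rV[R]_d) : R :=
  ((2 * pi) ^+ d)^-1 *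
  iint d (fun s => cos (dotp w (row_of_seq d s)) * (theta * K alpha nu (row_of_seq d s))).

Definition pos_def_fun (d : nat) (k : 'rV[R]_d -> R) : Prop :=
  (forall x, k (- x) = k x) /\
  forall (m : nat) (pts : 'I_m -> 'rV[R]_d) (c : 'I_m -> R),
    injective pts -> (exists i, c i != 0) ->
    0 < \sum_(i < m) \sum_(j < m) c i * c j * k (pts i - pts j).

Definition assumptionA1 (d p : nat) (S : forall n : nat, 'I_n -> 'rV[R]_d)
  (fl : 'I_p -> 'rV[R]_d -> R) (Cf : R) : Prop :=
  (forall delta : R, 0 < delta -> exists N : nat, forall n : nat, (N <= n)%N ->
     forall s, in_cube s -> exists i : 'I_n, enormr (s - S n i) <= delta) /\
  (forall (l : 'I_p) s, in_cube s -> `|fl l s| <= Cf).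

Definition assumptionA2 (d : nat) (K : R -> R -> 'rV[R]_d -> R) (nu theta0 alpha0 L r0 kappa : R)
  : Prop :=
  (0 < L /\ 0 < r0 < 2^-1 /\ 0 < kappa /\
   forall alpha : R, 0 < alpha -> `|alpha / alpha0 - 1| <= r0 ->
     forall w, `|specdens K nu theta0 alpha w / specdens K nu theta0 alpha0 w - 1|
               <= L * (`|alpha / alpha0 - 1| `^ kappa)) /\
  (forall theta : R, 0 < theta -> forall w alpha alpha', 0 < alpha -> alpha <= alpha' ->
     specdens K nu theta alpha' w <= specdens K nu theta alpha w).

Definition gaussian_rv (dT : measure_display) (T : measurableType dT)
  (P : probability T R) (Z : T -> R) (m v : R) : Prop :=
  measurable_fun [set: T] Z /\
  forall B : set R, measurable B ->
    P (Z @^-1` B) = (if v == 0 then \d_m B else normal_prob m (Num.sqrt v) B).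

(* X : zero-mean Gaussian field on [0,1]^d with covariance theta0 K(s - t),
   eps : independent Gaussian white noise with variance tau0, independent of X;
   i.e. (X, eps) is a jointly Gaussian centered family with these covariances. *)
Definition model_fields (dT : measure_display) (T : measurableType dT)
  (P : probability T R) (d : nat) (K : R -> R -> 'rV[R]_d -> R) (nu theta0 alpha0 tau0 : R)
  (X eps : 'rV[R]_d -> T -> R) : Prop :=
  forall (k : nat) (pts : 'I_k -> 'rV[R]_d) (a b : 'I_k -> R),
    (forall i, in_cube (pts i)) ->
    gaussian_rv P
      (fun w => \sum_(i < k) a i * X (pts i) w + \sum_(i < k) b i * eps (pts i) w) 0
      (\sum_(i < k) \sum_(j < k) a i * a j * (theta0 * K alpha0 nu (pts i - pts j)) +
       \sum_(i < k) \sum_(j < k) b i * b j * (if pts i == pts j then tau0 else 0)).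

Definition Kmat (d n : nat) (K : R -> R -> 'rV[R]_d -> R) (nu alpha : R)
  (pts : 'I_n -> 'rV[R]_d) : 'M[R]_n :=
  \matrix_(i < n, j < n) K alpha nu (pts i - pts j).

Definition Omega (d n : nat) (K : R -> R -> 'rV[R]_d -> R) (nu : R)
  (pts : 'I_n -> 'rV[R]_d) (theta alpha tau : R) : 'M[R]_n :=
  theta *: Kmat K nu alpha pts + tau%:M.

Definition Fmat (d p n : nat) (fl : 'I_p -> 'rV[R]_d -> R) (pts : 'I_n -> 'rV[R]_d)
  : 'M[R]_(n, p) := \matrix_(i < n, l < p) fl l (pts i).

End Defs.

(* Main.v *)
Require Import Defs.
From HB Require Import structures.
From mathcomp Require Import all_boot all_order all_algebra.
From mathcomp Require Import all_classical all_reals all_analysis.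
From mathcomp Require Import ring lra.
Import Order.TTheory GRing.Theory Num.Theory.
Import numFieldNormedType.Exports.
Local Open Scope classical_set_scope.
Local Open Scope ring_scope.

Section Helpers.
Context {R : realType}.

Lemma normal_tail (s t : R) : 0 < s -> 0 <= t ->
  (normal_prob 0 s [set x | (t < `|x|)%R] <= (2 * expR (- (3 * t ^+ 2) / (8 * s ^+ 2)))%:E)%E.
Proof.
move=> s0 t0.
set B := [set x : R | t < `|x|].
have mB : measurable B.
  have -> : B = (@Num.norm R R) @^-1` `]t, +oo[.
    by apply/seteqP; split => x /=; rewrite in_itv /= andbT.
  rewrite -[_ @^-1` _]setTI.
  by apply: (@measurable_realfun.normr_measurable R setT) => //.
set c := 2 * expR (- (3 * t ^+ 2) / (8 * s ^+ 2)).
have c0 : 0 <= c by rewrite mulr_ge0 ?expR_ge0.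
have s20 : (2 * s) != 0 by rewrite mulf_neq0 // gt_eqF.
apply: (@le_trans _ _ (\int[lebesgue_measure]_(x in B) (c%:E * (normal_pdf 0 (2 * s) x)%:E))%E).
  apply: ge0_le_integral => //.
  - by move=> x _; rewrite lee_fin normal_pdf_ge0.
  - apply/measurable_realfun.measurable_EFinP; apply: measurable_funTS; exact: measurable_normal_pdf.
  - apply: emeasurable_funM => //; apply/measurable_realfun.measurable_EFinP; apply: measurable_funTS; exact: measurable_normal_pdf.
  move=> x Bx; rewrite -EFinM lee_fin.
  rewrite /normal_pdf (gt_eqF s0) (negbTE s20) /=.
  have hpk : normal_peak s = 2 * normal_peak (2 * s).
    have hs : Num.sqrt ((2 * s) ^+ 2 * pi *+ 2) = 2 * Num.sqrt (s ^+ 2 * pi *+ 2).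
      rewrite exprMn -mulrA -mulrnAr sqrtrM ?exprn_ge0 // sqrtr_sqr ger0_norm //.
    rewrite /normal_peak hs invfM mulrA divff ?mul1r //.
  have hnf : normal_fun 0 s x = expR (- (3 * x ^+ 2) / (8 * s ^+ 2)) * normal_fun 0 (2 * s) x.
    rewrite /normal_fun -expRD subr0; congr expR.
    have sn0 : s != 0 by rewrite gt_eqF.
    rewrite exprMn !mulr2n; field.
    have s2 : 0 < s ^+ 2 by rewrite exprn_gt0.
    by rewrite sn0 !gt_eqF // ?addr_gt0 ?mulr_gt0.
  rewrite hpk hnf /c.
  have hx : t ^+ 2 <= x ^+ 2.
    have h : t ^+ 2 <= `|x| ^+ 2.
      by apply: lerXn2r; rewrite ?nnegrE ?normr_ge0 //; exact: ltW.
    by rewrite real_normK ?num_real in h.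
  have he : expR (- (3 * x ^+ 2) / (8 * s ^+ 2)) <= expR (- (3 * t ^+ 2) / (8 * s ^+ 2)).
    rewrite ler_expR ler_pdivrMr ?mulr_gt0 ?exprn_gt0 // divfK ?gt_eqF ?mulr_gt0 ?exprn_gt0 //.
    by rewrite lerN2 ler_pM2l.
  have p0 : 0 <= normal_peak (2 * s) by exact: normal_peak_ge0.
  have f0 : 0 <= normal_fun 0 (2 * s) x by exact: normal_fun_ge0.
  rewrite -!mulrA ler_pM2l // mulrCA; apply: ler_wpM2r => //; exact: mulr_ge0.
rewrite ge0_integralZl_EFin //; last 2 first.
- by move=> x _; rewrite lee_fin normal_pdf_ge0.
- apply/measurable_realfun.measurable_EFinP; apply: measurable_funTS; exact: measurable_normal_pdf.
rewrite -[X in (_ <= X)%E]mule1; apply: lee_wpmul2l; first by rewrite lee_fin.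
exact: (@probability_le1 _ _ _ (normal_prob 0 (2 * s))).
Qed.

Lemma sum_prod_sep n (f g : 'I_n -> R) :
  \sum_i \sum_j f i * g j = (\sum_i f i) * (\sum_j g j).
Proof. by rewrite big_distrl; apply: eq_bigr => i _; rewrite big_distrr. Qed.

Lemma CS n (a b : 'I_n -> R) :
  (\sum_i a i * b i) ^+ 2 <= (\sum_i a i ^+ 2) * (\sum_i b i ^+ 2).
Proof.
have E : \sum_i \sum_j (a i * b j - a j * b i) ^+ 2 =
   2 * ((\sum_i a i ^+ 2) * (\sum_i b i ^+ 2) - (\sum_i a i * b i) ^+ 2).
  transitivity (\sum_i \sum_j (a i ^+ 2 * b j ^+ 2) + \sum_i \sum_j (b i ^+ 2 * a j ^+ 2)
     + \sum_i \sum_j ((-2 * (a i * b i)) * (a j * b j))).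
    rewrite -!big_split /=; apply: eq_bigr => i _; rewrite -!big_split /=.
    by apply: eq_bigr => j _; ring.
  rewrite !sum_prod_sep -mulr_sumr; ring.
have : 0 <= \sum_i \sum_j (a i * b j - a j * b i) ^+ 2.
  by apply: sumr_ge0 => i _; apply: sumr_ge0 => j _; exact: sqr_ge0.
rewrite E; lra.
Qed.

Lemma CS_sqrt n (a b : 'I_n -> R) :
  `|\sum_i a i * b i| <= Num.sqrt (\sum_i a i ^+ 2) * Num.sqrt (\sum_i b i ^+ 2).
Proof.
rewrite -sqrtrM; last by apply: sumr_ge0 => i _; exact: sqr_ge0.
rewrite -sqrtr_sqr; apply: ler_wsqrtr; exact: CS.
Qed.

Lemma key n (M : 'M[R]_n) (c : R) : 0 < c ->
  (forall a : 'cV[R]_n, c * \sum_i a i ord0 ^+ 2 <= (a^T *m M *m a) ord0 ord0) ->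
  M \in unitmx /\ forall (u : 'rV[R]_n) (v : 'cV[R]_n),
   `|(u *m invmx M *m v) ord0 ord0| <=
     Num.sqrt (\sum_i u ord0 i ^+ 2) * Num.sqrt (\sum_i v i ord0 ^+ 2) / c.
Proof.
move=> c0 H.
have uM : M \in unitmx.
  rewrite unitmxE unitfE; apply/negP => /det0P [v vn0 vM].
  have := H v^T; rewrite trmxK vM mul0mx mxE pmulr_rle0 // => hs.
  have hs0 : \sum_i v^T i ord0 ^+ 2 = 0.
    by apply/eqP; rewrite eq_le hs sumr_ge0 // => i _; exact: sqr_ge0.
  have := psumr_eq0P (fun i _ => sqr_ge0 (v^T i ord0)) hs0.
  move=> h; move/negP: vn0; apply; apply/eqP/rowP => i.
  have := h i isT; rewrite !mxE => /eqP; rewrite sqrf_eq0 => /eqP -> //.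
split => // u v.
set a := invmx M *m v.
have Ma : M *m a = v by rewrite /a mulmxA mulmxV // mul1mx.
have h1 := H a; rewrite -mulmxA Ma in h1.
have e1 : (a^T *m v) ord0 ord0 = \sum_i a i ord0 * v i ord0.
  by rewrite mxE; apply: eq_bigr => i _; rewrite mxE.
rewrite e1 in h1.
have h2 := CS_sqrt _ (fun i => a i ord0) (fun i => v i ord0).
rewrite /= in h2.
set na := Num.sqrt (\sum_i a i ord0 ^+ 2).
set nv := Num.sqrt (\sum_i v i ord0 ^+ 2).
set nu := Num.sqrt (\sum_i u ord0 i ^+ 2).
have na0 : 0 <= na by exact: sqrtr_ge0.
have nv0 : 0 <= nv by exact: sqrtr_ge0.
have nu0 : 0 <= nu by exact: sqrtr_ge0.
have ea : \sum_i a i ord0 ^+ 2 = na ^+ 2 by rewrite sqr_sqrtr // sumr_ge0 // => i _; exact: sqr_ge0.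
have h3 : c * na ^+ 2 <= na * nv.
  rewrite -ea; apply: (le_trans h1); apply: (le_trans (ler_norm _)).
  exact: h2.
have h4 : c * na <= nv.
  have [->|nap] := eqVneq na 0; first by rewrite mulr0.
  have napos : 0 < na by rewrite lt_def nap na0.
  by rewrite expr2 mulrA mulrC ler_pM2l // in h3; rewrite mulrC.
rewrite -mulmxA [(u *m a) _ _]mxE.
apply: (le_trans (CS_sqrt _ (fun i => u ord0 i) (fun i => a i ord0))) => /=.
rewrite -/nu -/na ler_pdivlMr // -mulrA; apply: ler_wpM2l => //.
by rewrite mulrC.
Qed.

Lemma det_part n p (Om Om0 : 'M[R]_n) (F : 'M[R]_(n, p)) (y : 'cV[R]_n) (w : 'cV[R]_p)
  (tau tau0 Cf s : R) :
  0 < tau0 -> tau0 / 2 < tau -> (0 < n)%N -> 0 <= s ->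
  (forall a : 'cV[R]_n, tau * \sum_i a i ord0 ^+ 2 <= (a^T *m Om *m a) ord0 ord0) ->
  (forall a : 'cV[R]_n, tau0 * \sum_i a i ord0 ^+ 2 <= (a^T *m Om0 *m a) ord0 ord0) ->
  (forall i l, `|F i l| <= Cf) ->
  (forall i, `|y i ord0| <= 2 * s * n%:R) ->
  Num.sqrt (\sum_i w i ord0 ^+ 2) <= (n%:R ^+ 3)^-1 ->
  (y^T *m (invmx Om - invmx Om0) *m F *m w) ord0 ord0
   - 2^-1 * (w^T *m F^T *m (invmx Om - invmx Om0) *m F *m w) ord0 ord0
   >= - (8 * Cf * Num.sqrt p%:R * s / tau0 / n%:R) - 2 * Cf ^+ 2 * p%:R / tau0 / (n%:R ^+ 4).
Proof.
move=> t0 tt n0 s0 HOm HOm0 HF Hy Hw.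
have tp : 0 < tau by apply: lt_trans tt; rewrite divr_gt0.
have [_ K1] := key _ _ _ tp HOm.
have [_ K0] := key _ _ _ t0 HOm0.
set C := `|Cf|.
have C0 : 0 <= C by exact: normr_ge0.
have eCf : Cf * Num.sqrt p%:R = C * Num.sqrt p%:R.
  case: p F w HF {Hw} => [|p] F w HF; first by rewrite sqrtr0 !mulr0.
  have : 0 <= Cf by apply: le_trans (HF (Ordinal n0) ord0); exact: normr_ge0.
  by move=> cf0; rewrite /C ger0_norm.
have eCf2 : Cf ^+ 2 = C ^+ 2 by rewrite /C real_normK ?num_real.
set v := F *m w.
have nn : 0 < n%:R :> R by rewrite ltr0n.
set Y2 := \sum_i y i ord0 ^+ 2.
set V2 := \sum_i v i ord0 ^+ 2.
set W2 := \sum_i w i ord0 ^+ 2.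
have Y20 : 0 <= Y2 by apply: sumr_ge0 => i _; exact: sqr_ge0.
have V20 : 0 <= V2 by apply: sumr_ge0 => i _; exact: sqr_ge0.
have W20 : 0 <= W2 by apply: sumr_ge0 => i _; exact: sqr_ge0.
have hY : Y2 <= n%:R * (2 * s * n%:R) ^+ 2.
  apply: (@le_trans _ _ (\sum_(i < n) (2 * s * n%:R) ^+ 2)).
    apply: ler_sum => i _; rewrite -real_normK ?num_real //; apply: lerXn2r;
      rewrite ?nnegrE ?normr_ge0 ?mulr_ge0 ?ler0n //; exact: Hy.
  rewrite sumr_const card_ord; rewrite le_eqVlt; apply/orP; left; apply/eqP; exact: (esym (mulr_natl _ _)).
have hW : W2 <= (n%:R ^+ 3)^-1 ^+ 2.
  rewrite -(sqr_sqrtr W20); apply: lerXn2r => //;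
    rewrite ?nnegrE ?sqrtr_ge0 ?invr_ge0 ?exprn_ge0 ?ler0n //.
have hV : V2 <= n%:R * (p%:R * C ^+ 2 * W2).
  apply: (@le_trans _ _ (\sum_(i < n) (p%:R * C ^+ 2 * W2))); last first.
    rewrite sumr_const card_ord; rewrite le_eqVlt; apply/orP; left; apply/eqP.
    exact: (esym (mulr_natl _ _)).
  apply: ler_sum => i _; rewrite /v mxE.
  apply: (le_trans (CS _ (fun l => F i l) (fun l => w l ord0))) => /=.
  apply: ler_wpM2r => //.
  apply: (@le_trans _ _ (\sum_(l < p) C ^+ 2)); last first.
    rewrite sumr_const card_ord; rewrite le_eqVlt; apply/orP; left; apply/eqP.
    exact: (esym (mulr_natl _ _)).
  apply: ler_sum => l _; rewrite -real_normK ?num_real //; apply: lerXn2r;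
    rewrite ?nnegrE ?normr_ge0 //; apply: (le_trans (HF i l)); exact: ler_norm.
have eT1 : y^T *m (invmx Om - invmx Om0) *m F *m w =
    y^T *m invmx Om *m v - y^T *m invmx Om0 *m v.
  by rewrite /v -mulmxA mulmxBr mulmxBl.
have eT2 : w^T *m F^T *m (invmx Om - invmx Om0) *m F *m w =
    v^T *m invmx Om *m v - v^T *m invmx Om0 *m v.
  by rewrite /v -trmx_mul -mulmxA mulmxBr mulmxBl.
have eB : forall A B : 'M[R]_1, (A - B) ord0 ord0 = A ord0 ord0 - B ord0 ord0.
  by move=> A B; rewrite !mxE.
rewrite eT1 eT2 !eB.
have eY : \sum_i (y^T) ord0 i ^+ 2 = Y2 by apply: eq_bigr => i _; rewrite mxE.
have eV : \sum_i (v^T) ord0 i ^+ 2 = V2 by apply: eq_bigr => i _; rewrite mxE.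
have hi : tau^-1 <= 2 / tau0.
  rewrite -invf_div lef_pV2 ?posrE ?divr_gt0 //; exact: ltW.
have hdiv : forall x, 0 <= x -> x / tau <= 2 * x / tau0.
  move=> x x0; rewrite (_ : 2 * x / tau0 = x * (2 / tau0)); first exact: ler_wpM2l.
  by rewrite mulrA (mulrC x).
set P1 := Num.sqrt Y2 * Num.sqrt V2.
have P10 : 0 <= P1 by rewrite mulr_ge0 ?sqrtr_ge0.
have eVV : Num.sqrt V2 * Num.sqrt V2 = V2 by rewrite -expr2 sqr_sqrtr.
have ha1 := K1 y^T v; rewrite eY -/P1 ler_norml in ha1.
have ha0 := K0 y^T v; rewrite eY -/P1 ler_norml in ha0.
have hb1 := K1 v^T v; rewrite eV eVV ler_norml in hb1.
have hb0 := K0 v^T v; rewrite eV eVV ler_norml in hb0.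
move/andP: ha1 => [ha1 _]; move/andP: ha0 => [_ ha0].
move/andP: hb1 => [_ hb1]; move/andP: hb0 => [hb0 _].
have d1 := hdiv _ P10.
have d2 := hdiv _ V20.
set m := n%:R in nn hY hW hV d1 d2 *.
set Q := 2 * s * C * Num.sqrt p%:R / m.
have Q0 : 0 <= Q by rewrite /Q !mulr_ge0 ?sqrtr_ge0 ?invr_ge0 ?(ltW nn).
have hP1 : P1 <= Q.
  rewrite /P1 -sqrtrM // -(ger0_norm Q0) -sqrtr_sqr; apply: ler_wsqrtr.
  apply: (@le_trans _ _ ((m * (2 * s * m) ^+ 2) * (m * (p%:R * C ^+ 2 * W2)))).
    by apply: ler_pM.
  have -> : (m * (2 * s * m) ^+ 2) * (m * (p%:R * C ^+ 2 * W2)) =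
     (4 * s ^+ 2 * p%:R * C ^+ 2) * (m ^+ 4 * W2) by ring.
  have -> : Q ^+ 2 = (4 * s ^+ 2 * p%:R * C ^+ 2) * (m ^+ 4 * (m ^+ 3)^-1 ^+ 2).
    rewrite /Q; have sp : Num.sqrt (p%:R : R) ^+ 2 = p%:R by rewrite sqr_sqrtr ?ler0n.
    have mn0 : m != 0 by rewrite gt_eqF.
    rewrite !exprMn sp; field; by rewrite mn0.
  apply: ler_wpM2l; first by rewrite !mulr_ge0 ?exprn_ge0 ?ler0n.
  by apply: ler_wpM2l; rewrite ?exprn_ge0 ?(ltW nn).
have hV2 : V2 <= m * (p%:R * C ^+ 2 * (m ^+ 3)^-1 ^+ 2).
  apply: (le_trans hV); apply: ler_wpM2l; first exact: ltW.
  by apply: ler_wpM2l => //; rewrite mulr_ge0 ?ler0n ?exprn_ge0.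
have it0 : 0 < tau0^-1 by rewrite invr_gt0.
have f1 : 3 * P1 / tau0 <= 8 * Cf * Num.sqrt p%:R * s / tau0 / m.
  have -> : 8 * Cf * Num.sqrt p%:R * s / tau0 / m = 8 * (Cf * Num.sqrt p%:R) * s / tau0 / m by ring.
  rewrite eCf.
  apply: (@le_trans _ _ (3 * Q / tau0)).
    by apply: ler_wpM2r; rewrite ?invr_ge0 ?(ltW t0) ?(ltW nn) //; apply: ler_wpM2l.
  have -> : 3 * Q / tau0 = 6 * (s * C * Num.sqrt p%:R / tau0 / m) by rewrite /Q; ring.
  have -> : 8 * (C * Num.sqrt p%:R) * s / tau0 / m = 8 * (s * C * Num.sqrt p%:R / tau0 / m) by ring.
  apply: ler_wpM2r; last by lra.
  by rewrite !mulr_ge0 ?sqrtr_ge0 ?invr_ge0 ?(ltW t0) ?(ltW nn).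
have f2 : 2^-1 * (3 * V2 / tau0) <= 2 * Cf ^+ 2 * p%:R / tau0 / m ^+ 4.
  rewrite eCf2.
  apply: (@le_trans _ _ (2^-1 * (3 * (m * (p%:R * C ^+ 2 * (m ^+ 3)^-1 ^+ 2)) / tau0))).
    apply: ler_wpM2l; first by lra.
    by apply: ler_wpM2r; rewrite ?invr_ge0 ?(ltW t0) ?(ltW nn) //; apply: ler_wpM2l.
  have mn0 : m != 0 by rewrite gt_eqF.
  have -> : 2^-1 * (3 * (m * (p%:R * C ^+ 2 * (m ^+ 3)^-1 ^+ 2)) / tau0) =
     (3 / 2 * m^-1) * (C ^+ 2 * p%:R / tau0 / m ^+ 4).
    by field; rewrite mn0 gt_eqF.
  have -> : 2 * C ^+ 2 * p%:R / tau0 / m ^+ 4 = 2 * (C ^+ 2 * p%:R / tau0 / m ^+ 4) by ring.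
  apply: ler_wpM2r; first by rewrite !mulr_ge0 ?invr_ge0 ?sqr_ge0 ?exprn_ge0 ?ler0n ?(ltW t0) ?(ltW nn).
  have m1 : 1 <= m by rewrite /m ler1n.
  have : m^-1 <= 1 by rewrite invr_le1 ?unitfE.
  lra.
have g1 : P1 / tau <= 2 * P1 / tau0 := d1.
have g2 : V2 / tau <= 2 * V2 / tau0 := d2.
have e3 : 3 * P1 / tau0 = 2 * P1 / tau0 + P1 / tau0 by ring.
have e4 : 3 * V2 / tau0 = 2 * V2 / tau0 + V2 / tau0 by ring.
lra.
Qed.

Lemma quad_expand n (M : 'M[R]_n) (a : 'cV[R]_n) :
  (a^T *m M *m a) ord0 ord0 = \sum_i \sum_j a i ord0 * a j ord0 * M i j.
Proof.
rewrite mxE; under eq_bigr do rewrite mxE big_distrl.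
rewrite exchange_big /=; apply: eq_bigr => i _; apply: eq_bigr => j _.
rewrite !mxE /=; ring.
Qed.

Lemma quad_Omega d n (K : R -> R -> 'rV[R]_d -> R) nu (pts : 'I_n -> 'rV[R]_d)
  (theta alpha tau : R) :
  injective pts -> 0 <= theta -> pos_def_fun (K alpha nu) ->
  forall a : 'cV[R]_n, tau * \sum_i a i ord0 ^+ 2 <=
     (a^T *m Omega K nu pts theta alpha tau *m a) ord0 ord0.
Proof.
move=> inj th0 [_ pd] a.
rewrite /Omega mulmxDr mulmxDl -scalemxAr -scalemxAl mul_mx_scalar -scalemxAl mxE.
have eS : forall (c : R) (A : 'M[R]_1), (c *: A) ord0 ord0 = c * A ord0 ord0 by move=> c A; rewrite mxE.
rewrite !eS [(a^T *m a) _ _]mxE.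
have -> : \sum_j a^T ord0 j * a j ord0 = \sum_i a i ord0 ^+ 2.
  by apply: eq_bigr => i _; rewrite mxE expr2.
rewrite lerDr; apply: mulr_ge0 => //.
rewrite quad_expand.
have -> : \sum_i \sum_j a i ord0 * a j ord0 * Kmat K nu alpha pts i j =
   \sum_i \sum_j a i ord0 * a j ord0 * K alpha nu (pts i - pts j).
  by apply: eq_bigr => i _; apply: eq_bigr => j _; rewrite mxE.
have [[i ai]|] := pselect (exists i, a i ord0 != 0).
  by apply: ltW; apply: (pd n pts (fun i => a i ord0)) => //; exists i.
move=> nex; rewrite big1 // => i _; rewrite big1 // => j _.
have -> : a i ord0 = 0.
  by apply/eqP; apply: contra_notT nex => h; exists i.
by rewrite !mul0r.
Qed.
End Helpers.
Theorem lemmaS6 (R : realType) (d : nat) (K : R -> R -> 'rV[R]_d -> R)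
  (nu theta0 alpha0 L r0 kappa : R) :
  exists N4 : nat,
  forall (p : nat) (fl : 'I_p -> 'rV[R]_d -> R) (Cf : R)
    (S : forall n : nat, 'I_n -> 'rV[R]_d) (tau0 : R) (beta0 : 'cV[R]_p)
    (dT : measure_display) (T : measurableType dT) (P : probability T R)
    (X eps : 'rV[R]_d -> T -> R),
  0 < nu -> 0 < theta0 -> 0 < alpha0 -> 0 < tau0 ->
  (forall alpha : R, 0 < alpha -> pos_def_fun (K alpha nu)) ->
  (forall n : nat, injective (S n) /\ forall i, in_cube (S n i)) ->
  model_fields P K nu theta0 alpha0 tau0 X eps ->
  assumptionA1 S fl Cf ->
  assumptionA2 K nu theta0 alpha0 L r0 kappa ->
  let Y : 'rV[R]_d -> T -> R :=
    fun s w => \sum_(l < p) fl l s * beta0 l ord0 + X s w + eps s w in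
  forall eps1 eps2 : R, 0 < eps1 < 2^-1 -> 0 < eps2 < 2^-1 ->
  forall n : nat, (N4 < n)%N ->
  let Fn := Fmat fl (S n) in
  let Omega0 := Omega K nu (S n) theta0 alpha0 tau0 in
  let Ytil : T -> 'cV[R]_n := fun w => \col_(i < n) Y (S n i) w - Fn *m beta0 in
  exists A : set T, measurable A /\
    (A `<=` [set w : T | forall (theta alpha tau : R) (beta : 'cV[R]_p),
        `|theta / theta0 - 1| < eps1 -> `|tau / tau0 - 1| < eps2 -> 0 < alpha ->
        enormc (beta - beta0) <= (n%:R ^+ 3)^-1 ->
        let D := invmx (Omega K nu (S n) theta alpha tau) - invmx Omega0 in
        ((Ytil w)^T *m D *m Fn *m (beta - beta0)) ord0 ord0
          - 2^-1 * ((beta - beta0)^T *m Fn^T *m D *m Fn *m (beta - beta0)) ord0 ord0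
        >= - (8 * Cf * Num.sqrt p%:R * Num.sqrt (theta0 * K alpha0 nu 0 + tau0)
                 / tau0 / n%:R)
            - 2 * Cf ^+ 2 * p%:R / tau0 / (n%:R ^+ 4)]) /\
    ((1 - expR (- (ln (n%:R : R)) ^+ 2))%:E <= P A)%E.
Proof.
exists 0%N.
move=> p fl Cf S tau0 beta0 dT T P X eps hnu hth0 hal0 htau0 hK hS hmodel hA1 hA2 Y
  eps1 eps2 he1 he2 n hn Fn Omega0 Ytil.
have K00 : 0 < K alpha0 nu 0.
  have [_ pd] := hK alpha0 hal0.
  have := pd 1%N (fun _ => 0) (fun _ => 1).
  rewrite !big_ord1 subrr !mul1r; apply.
    by move=> i j _; rewrite (ord1 i) (ord1 j).
  by exists ord0; exact: oner_neq0.
set sig2 := theta0 * K alpha0 nu 0 + tau0.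
have sig0 : 0 < sig2 by rewrite addr_gt0 // mulr_gt0.
set s := Num.sqrt sig2.
have s0 : 0 < s by rewrite sqrtr_gt0.
set t := 2 * s * n%:R.
have t0 : 0 <= t by rewrite !mulr_ge0 ?ler0n ?(ltW s0).
have hZ : forall i : 'I_n,
    gaussian_rv P (fun w => X (S n i) w + eps (S n i) w) 0 sig2.
  move=> i.
  have := hmodel 1%N (fun _ => S n i) (fun _ => 1) (fun _ => 1) (fun _ => (hS n).2 i).
  have ef : (fun w => \sum_(j < 1) 1 * X (S n i) w + \sum_(j < 1) 1 * eps (S n i) w)
     = (fun w => X (S n i) w + eps (S n i) w).
    by apply/funext => w; rewrite !big_ord1 !mul1r.
  rewrite /= ef !big_ord1 subrr eqxx !mul1r.
  done.
set B := [set x : R | t < `|x|].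
have mB : measurable B.
  have -> : B = (@Num.norm R R) @^-1` `]t, +oo[.
    by apply/seteqP; split => x /=; rewrite in_itv /= andbT.
  rewrite -[_ @^-1` _]setTI.
  by apply: (@measurable_realfun.normr_measurable R setT).
set G := fun i : 'I_n => (fun w => X (S n i) w + eps (S n i) w) @^-1` B.
have mG : forall i, measurable (G i).
  move=> i; have [mZ _] := hZ i; rewrite -[G i]setTI; exact: mZ.
set c := 2 * expR (- (3 * t ^+ 2) / (8 * s ^+ 2)).
have PG : forall i, (P (G i) <= c%:E)%E.
  move=> i; have [_ hP] := hZ i; rewrite /G (hP _ mB) (gt_eqF sig0).
  exact: normal_tail.
set F := fun k : nat => if insub k is Some i then G i else set0.
have FG : forall i : 'I_n, F i = G i by move=> i; rewrite /F valK.
have mF : forall k, measurable (F k) by move=> k; rewrite /F; case: insub.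
set U := \bigcup_(k in `I_n) F k.
have mU : measurable U by apply: bigcup_measurable => k _; exact: mF.
exists (~` U); split; first exact: measurableC.
split.
  move=> w hw theta alpha tau beta h1 h2 h3 h4.
  move/andP: he1 => [he1a he1b]; move/andP: he2 => [he2a he2b].
  have ht : 2^-1 * tau0 < tau.
    move: h2; rewrite ltr_norml => /andP [h2a _].
    have : 2^-1 < tau / tau0 by lra.
    by rewrite ltr_pdivlMr.
  have hth : 2^-1 * theta0 < theta.
    move: h1; rewrite ltr_norml => /andP [h1a _].
    have : 2^-1 < theta / theta0 by lra.
    by rewrite ltr_pdivlMr.
  have th0 : 0 <= theta.
    have : 0 < 2^-1 * theta0 by rewrite mulr_gt0 ?invr_gt0.
    lra.
  apply: (det_part _ _ _ _ _ _ _ tau).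
  - exact: htau0.
  - by rewrite mulrC.
  - exact: hn.
  - exact: (ltW s0).
  - by apply: quad_Omega => //; [exact: (hS n).1 | exact: hK].
  - by apply: quad_Omega => //; [exact: (hS n).1 | exact: ltW | exact: hK].
  - by move=> i l; rewrite /Fn /Fmat mxE; exact: hA1.2 _ _ ((hS n).2 i).
  - move=> i; rewrite /Ytil !mxE.
    have eY : Y (S n i) w - \sum_j Fn i j * beta0 j ord0 = X (S n i) w + eps (S n i) w.
      have -> : \sum_j Fn i j * beta0 j ord0 = \sum_(l < p) fl l (S n i) * beta0 l ord0.
        by apply: eq_bigr => l _; rewrite /Fn /Fmat mxE.
      rewrite /Y; ring.
    rewrite eY leNgt; apply/negP => hlt; apply: hw; exists (val i).
      exact: ltn_ord.
    by rewrite FG.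
  - exact: h4.
rewrite probability_setC //.
have hU : (P U <= (n%:R * c)%:E)%E.
  have sub : U `<=` \big[setU/set0]_(k < n) F k by rewrite /U bigcup_mkord.
  apply: (le_trans (content_subadditive P (fun k _ => mF k) mU sub)).
  apply: (@le_trans _ _ (\sum_(k < n) c%:E)%E).
    by apply: lee_sum => k _; rewrite FG; exact: PG.
  by rewrite sumEFin sumr_const card_ord mulr_natl.
have PU0 : (0 <= P U)%E := measure_ge0 _ _.
have finU : P U \is a fin_num.
  by rewrite ge0_fin_numE // (le_lt_trans hU) // ltry.
rewrite -(fineK finU) -EFinB lee_fin.
have hU' : fine (P U) <= n%:R * c by rewrite -lee_fin fineK.
suff : n%:R * c <= expR (- (ln (n%:R : R)) ^+ 2) by lra.
have nn : 0 < (n%:R : R) by rewrite ltr0n.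
have n1 : 1 <= (n%:R : R) by rewrite ler1n.
have ec : n%:R * c = expR (ln 2 + ln (n%:R : R) - 3 / 2 * n%:R ^+ 2).
  rewrite /c /t !expRD lnK ?posrE // lnK ?posrE //.
  have -> : - (3 * (2 * s * n%:R) ^+ 2) / (8 * s ^+ 2) = - (3 / 2 * n%:R ^+ 2).
    by field; rewrite gt_eqF.
  ring.
rewrite ec ler_expR.
have l2 : ln (2 : R) <= 1.
  by have := @le_ln1Dx R 1; rewrite (_ : (1 + 1 : R) = 2) //; apply; lra.
have ln1 : ln (n%:R : R) <= n%:R - 1.
  have := @le_ln1Dx R (n%:R - 1); rewrite (_ : 1 + (n%:R - 1) = (n%:R : R)); [apply; lra | ring].
have ln0 : 0 <= ln (n%:R : R) := ln_ge0 n1.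
have lsq : ln (n%:R : R) ^+ 2 <= (n%:R - 1) ^+ 2.
  by apply: lerXn2r; rewrite ?nnegrE ?subr_ge0.
have n2 : 1 <= (n%:R : R) ^+ 2 by rewrite expr_ge1.
nra.
Qed.
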